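(* Let $(\mathcal{X},\mathcal{B},\lambda)$ be a measure space with $\lambda$ positive and $\sigma$-finite, $P$ a probability measure with density $f\in\mathcal{L}^2(\mathcal{X},\lambda)$ with respect to $\lambda$, and $X_1,\dots,X_N$ i.i.d. with law $P$. Let $f_1,\dots,f_m\in\mathcal{L}^2$ with $D_k=\int f_k^2d\lambda>0$, and assume there are known constants $C_k>0$ with $|f_k(x)|\le\sqrt{C_kD_k}$ for all $x$ and all $k$. Let $a>1$, $\varepsilon>0$ and $k\in\{1,\dots,m\}$, and let $$B=\left\{a^l:\ 0\le l\le\left\lfloor\frac{\log\frac{N}{\sqrt{C_kD_k}}}{\log a}\right\rfloor-1\right\}.$$ Then with $P^{\otimes N}$-probability at least $1-\varepsilon$, $$\sup_{\beta\in B}\alpha^{\inf}_k\left(\frac{\varepsilon\log a}{\log N-\frac12\log C_kD_k},\beta\right)\le\overline{\alpha}_k\le\inf_{\beta\in B}\alpha^{\sup}_k\left(\frac{\varepsilon\log a}{\log N-\frac12\log C_kD_k},\beta\right).$$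
   Context: $\overline{\alpha}_k=\frac{\int f_kf\,d\lambda}{D_k}$. For $\eta>0$ and $\beta>0$: $$\alpha^{\sup}_k(\eta,\beta)=\frac{N-N\exp\left[\frac1N\sum_{i=1}^N\log\left(1-\frac{\beta}{N}f_k(X_i)\right)-\frac{\log\frac{2m}{\eta}}{N}\right]}{D_k\beta},\quad \alpha^{\inf}_k(\eta,\beta)=\frac{N\exp\left[\frac1N\sum_{i=1}^N\log\left(1+\frac{\beta}{N}f_k(X_i)\right)-\frac{\log\frac{2m}{\eta}}{N}\right]-N}{D_k\beta}.$$ Conventions: $\sup\emptyset=-\infty$, $\inf\emptyset=+\infty$. *)

(* Defs.v *)
From HB Require Import structures.
From mathcomp Require Import all_boot all_order all_algebra.
From mathcomp Require Import all_classical all_reals all_analysis.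
Set Implicit Arguments. Unset Strict Implicit. Unset Printing Implicit Defensive.
Import Order.TTheory GRing.Theory Num.Theory.
Local Open Scope ring_scope.
Local Open Scope classical_set_scope.

(* Confidence bounds of the paper, for a sample x : 'I_N -> T, the function
   g = f_k, its squared norm Dk = D_k, the number m of functions, eta, beta. *)
Definition alpha_sup (R : realType) (T : Type) (N m : nat) (g : T -> R)
  (Dk : R) (x : 'I_N -> T) (eta beta : R) : R :=
  (N%:R - N%:R * expR ((N%:R)^-1 * (\sum_(i < N) ln (1 - beta / N%:R * g (x i)))
                       - ln (2 * m%:R / eta) / N%:R)) / (Dk * beta).

Definition alpha_inf (R : realType) (T : Type) (N m : nat) (g : T -> R)
  (Dk : R) (x : 'I_N -> T) (eta beta : R) : R :=
  (N%:R * expR ((N%:R)^-1 * (\sum_(i < N) ln (1 + beta / N%:R * g (x i)))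
                - ln (2 * m%:R / eta) / N%:R) - N%:R) / (Dk * beta).

Definition mutually_independent (d d' : measure_display) (Omega : measurableType d)
  (T : measurableType d') (R : realType) (Pr : probability Omega R) (N : nat)
  (X : 'I_N -> Omega -> T) : Prop :=
  forall A : 'I_N -> set T, (forall i, measurable (A i)) ->
    Pr (\bigcap_(i in [set: 'I_N]) (X i @^-1` A i)) =
    (\prod_(i < N) Pr (X i @^-1` A i))%E.

(* Main.v *)
Require Import Defs.
From HB Require Import structures.
From mathcomp Require Import all_boot all_order all_algebra.
From mathcomp Require Import all_classical all_reals all_analysis.
From mathcomp Require Import ring lra measurable_realfun.
Import Order.TTheory GRing.Theory Num.Theory.
Local Open Scope ring_scope.
Local Open Scope classical_set_scope.

Lemma sub_bigU (R : realType) (dO : measure_display) (Omega : measurableType dO)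
  (Pr : probability Omega R) (I : Type) (r : seq I) (F : I -> set Omega) :
  (forall i, measurable (F i)) ->
  (Pr (\big[setU/set0]_(i <- r) F i) <= \sum_(i <- r) Pr (F i))%E.
Proof.
move=> mF; elim: r => [|x r IH]; first by rewrite !big_nil measure0.
rewrite !big_cons; apply: le_trans (measureU2 _ _ _) _ => //.
  exact: bigsetU_measurable.
exact: leeD.
Qed.

Lemma mem_bigU (T : Type) (I : eqType) (r : seq I) (F : I -> set T) (x : I) :
  x \in r -> F x `<=` \big[setU/set0]_(i <- r) F i.
Proof.
elim: r => [//|y r IH]; rewrite in_cons big_cons => /orP[/eqP -> | xr] w Fw.
  by left.
by right; apply: IH.
Qed.

Lemma ln_prod (R : realType) (I : Type) (r : seq I) (F : I -> R) :
  (forall i, 0 < F i) -> ln (\prod_(i <- r) F i) = \sum_(i <- r) ln (F i).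
Proof.
move=> Fp; elim: r => [|x r IH]; first by rewrite !big_nil ln1.
rewrite !big_cons lnM ?IH // posrE //; exact: prodr_gt0.
Qed.

Lemma pow_bound (R : realType) (mu del : R) (n : nat) :
  0 <= mu -> 0 <= del <= 1 ->
  (mu + del) ^+ n <= mu ^+ n + del * (n%:R * (mu + 1) ^+ n.-1).
Proof.
move=> mu0 /andP[d0 d1].
rewrite -lerBlDl subrXX addrAC subrr add0r ler_wpM2l //.
apply: (@le_trans _ _ (\sum_(i < n) (mu + 1) ^+ n.-1)).
  apply: ler_sum => i _.
have hi : (i <= n.-1)%N.
    by have := ltn_ord i; case: (n) i => // n' i'; rewrite ltnS.
  have -> : (mu + 1) ^+ n.-1 = (mu + 1) ^+ (n.-1 - i) * (mu + 1) ^+ i.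
    by rewrite -exprD subnK.
  apply: ler_pM; rewrite ?exprn_ge0 ?addr_ge0 //.
    by apply: lerXn2r; rewrite ?nnegrE ?addr_ge0 // lerD2l.
  by apply: lerXn2r; rewrite ?nnegrE ?addr_ge0 // lerDl.
by rewrite sumr_const card_ord mulr_natl.
Qed.

Lemma core_delta (R : realType) (d : measure_display) (T : measurableType d)
  (lam : {measure set T -> \bar R})
  (P : probability T R) (f : T -> R)
  (Hfm : measurable_fun setT f) (Hf0 : forall x, 0 <= f x)
  (Hdens : forall A, measurable A -> P A = (\int[lam]_(x in A) (f x)%:E)%E)
  (dO : measure_display) (Omega : measurableType dO) (Pr : probability Omega R)
  (N : nat) (X : 'I_N -> Omega -> T)
  (HXm : forall i, measurable_fun setT (X i))
  (HXlaw : forall i A, measurable A -> Pr (X i @^-1` A) = P A)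
  (HXind : mutually_independent Pr X)
  (h : T -> R) (hm : measurable_fun setT h) (M : R) (hb : forall x, 0 <= h x <= M)
  (mu : R) (Hmu : (\int[lam]_x (h x * f x)%:E)%E = mu%:E) (c del : R)
  (c0 : 0 < c) (d0 : 0 < del) :
  exists B, measurable B /\ [set w | c < \prod_(i < N) h (X i w)] `<=` B /\
    (Pr B <= (((mu + del) ^+ N) / c)%:E)%E.
Proof.
pose K := Num.trunc (M / del).
pose A (j : 'I_K.+1) := h @^-1` `[(j%:R * del), (j.+1%:R * del)[.
have mA j : measurable (A j).
  by rewrite -[A j]setTI; apply: (hm measurableT _ (measurable_itv _)).
have Aiff j x : A j x <-> (j%:R <= h x / del < j.+1%:R).
  rewrite /A /= in_itv /= /Order.lteif /= ler_pdivlMr // ltr_pdivrMr //.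
have hx0 x : 0 <= h x / del by apply: divr_ge0; [case/andP: (hb x) | exact: ltW].
pose idx x : 'I_K.+1 := inord (Num.trunc (h x / del)).
have hidx y : A (idx y) y.
  apply/Aiff; rewrite /idx inordK; first exact: truncn_itv (hx0 y).
  rewrite ltnS; apply: le_truncn; rewrite ler_pM2r ?invr_gt0 //.
  by case/andP: (hb y).
have Atriv : trivIset setT A.
  move=> i j _ _ [x [/Aiff Ai /Aiff Aj]]; apply: val_inj => /=.
  by rewrite -(truncn_def Ai) -(truncn_def Aj).
pose v (j : 'I_K.+1) := j.+1%:R * del.
have v0 j : 0 <= v j by rewrite mulr_ge0 // ltW.
have vA j x : A j x -> h x <= v j /\ v j <= h x + del.
  rewrite /A /= in_itv /= => /andP[h1 h2]; split; first exact: ltW.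
  by rewrite /v -addn1 natrD mulrDl mul1r lerD2r.
pose p (j : 'I_K.+1) := fine (P (A j)).
have Pp j : P (A j) = (p j)%:E by rewrite fineK // fin_num_measure.
have p0 j : 0 <= p j by rewrite /p fine_ge0 // measure_ge0.
pose E (phi : {ffun 'I_N -> 'I_K.+1}) := \bigcap_(i in [set: 'I_N]) X i @^-1` A (phi i).
have mXA i j : measurable (X i @^-1` A j).
  by rewrite -[X in measurable X]setTI; apply: (HXm i measurableT _ (mA j)).
have mE phi : measurable (E phi).
  by apply: fin_bigcap_measurable => // i _; apply: mXA.
have PrE phi : Pr (E phi) = (\prod_i p (phi i))%:E.
  by rewrite /E HXind // -prodEFin; apply: eq_bigr => i _; rewrite HXlaw // Pp.
pose F (phi : {ffun 'I_N -> 'I_K.+1}) := if c < \prod_(i < N) v (phi i) then E phi else set0.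
have mF phi : measurable (F phi) by rewrite /F; case: ifP.
exists (\big[setU/set0]_(phi <- index_enum {ffun 'I_N -> 'I_K.+1}) F phi).
split; first by apply: bigsetU_measurable => phi _.
split.
  move=> w /= hw.
  pose phi := [ffun i => idx (X i w)].
  apply: (@mem_bigU _ _ _ _ phi); first by rewrite mem_index_enum.
  rewrite /F ifT.
    by move=> i _; rewrite /= ffunE; apply: hidx.
  apply: (lt_le_trans hw); apply: ler_prod => i _; rewrite ffunE.
  by case/andP: (hb (X i w)) => -> _ /=; case: (vA _ _ (hidx (X i w))).
apply: le_trans (@sub_bigU _ _ _ Pr _ _ _ mF) _.
pose S := \sum_(j : 'I_K.+1) v j * p j.
have S0 : 0 <= S by apply: sumr_ge0 => j _; apply: mulr_ge0.
have Sle : S <= mu + del.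
  rewrite -lee_fin -sumEFin.
  have mf' : measurable_fun setT (EFin \o f) by apply/measurable_EFinP.
  have mhf : measurable_fun setT (EFin \o (fun x => (h x + del) * f x)).
    apply/measurable_EFinP; apply: measurable_funM => //.
    by apply: measurable_funD => //; exact: measurable_cst.
  have hp x : 0 <= h x by case/andP: (hb x).
  have hf0 x : (0 <= ((h x + del) * f x)%:E)%E.
    by rewrite lee_fin mulr_ge0 // addr_ge0 // ltW.
  apply: (@le_trans _ _ (\sum_(j : 'I_K.+1)
     \int[lam]_(x in A j) ((h x + del) * f x)%:E)%E).
    apply: lee_sum => j _.
    rewrite EFinM -Pp Hdens // -ge0_integralZl //; [ | exact: measurable_funTS
      | by move=> x _; rewrite lee_fin | by rewrite lee_fin].
    apply: ge0_le_integral => //.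
    - by move=> x _; rewrite mule_ge0 // lee_fin.
    - apply/measurable_EFinP; apply: measurable_funM; first exact: measurable_cst.
      exact: measurable_funTS.
    - exact: measurable_funTS.
    - move=> x Ax; rewrite -EFinM lee_fin ler_wpM2r //.
      by case: (vA j x Ax).
  rewrite -ge0_integral_bigsetU //; last 3 first.
  - exact: index_enum_uniq.
  - by apply: sub_trivIset Atriv.
  - exact: measurable_funTS.
  apply: le_trans (ge0_subset_integral _ _ _ mhf _ _) _ => //.
  - by apply: bigsetU_measurable.
  - by move=> x _; apply: hf0.
  rewrite /=.
  rewrite (eq_integral (fun x => (h x * f x)%:E + del%:E * (f x)%:E)%E); last first.
    by move=> x _; rewrite mulrDl EFinD EFinM.
  rewrite ge0_integralD //; [ | by move=> x _; rewrite lee_fin mulr_ge0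
    | by have := measurable_funM hm Hfm; move/measurable_EFinP
    | by move=> x _; apply: mule_ge0; rewrite lee_fin // ltW
    | exact: measurable_funeM].
  rewrite ge0_integralZl //; [ | by move=> x _; rewrite lee_fin
    | by rewrite lee_fin ltW].
  by rewrite -Hdens // probability_setT mule1 Hmu.
apply: (@le_trans _ _ (\sum_(phi : {ffun 'I_N -> 'I_K.+1})
   ((\prod_(i < N) (v (phi i) * p (phi i))) / c)%:E)%E).
  apply: lee_sum => phi _; rewrite /F; case: ifP => hc.
    rewrite PrE lee_fin big_split /= ler_pdivlMr // mulrC.
    by apply: ler_wpM2r; [apply: prodr_ge0 | apply: ltW].
  rewrite measure0 lee_fin; apply: divr_ge0; last exact: ltW.
  by apply: prodr_ge0 => i _; apply: mulr_ge0.
rewrite sumEFin lee_fin -mulr_suml -(bigA_distr_bigA (fun (i : 'I_N) (j : 'I_K.+1) => v j * p j)) /= prodr_const card_ord.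
apply: ler_wpM2r; first by rewrite invr_ge0 ltW.
apply: (@lerXn2r _ N S (mu + del)) => //; rewrite nnegrE //.
exact: le_trans Sle.
Qed.

Lemma le_of_harm (R : realType) (x y Q : R) : 0 <= Q ->
  (forall K : nat, x <= y + (K.+1%:R)^-1 * Q) -> x <= y.
Proof.
move=> Q0 H; rewrite leNgt; apply/negP => hyx.
have e0 : 0 < x - y by rewrite subr_gt0.
pose K := Num.trunc (Q / (x - y)).
have hK : Q / (x - y) < K.+1%:R by apply: truncnS_gt.
have hK' : (K.+1%:R)^-1 * Q < x - y.
  rewrite mulrC ltr_pdivrMr ?ltr0Sn //.
  by rewrite ltr_pdivrMr // mulrC in hK.
have HK := H K.
suff : x < x by rewrite ltxx.
move: HK hK' hyx; generalize (K.+1%:R^-1 * Q) => a. lra.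
Qed.

Lemma core (R : realType) (d : measure_display) (T : measurableType d)
  (lam : {measure set T -> \bar R})
  (P : probability T R) (f : T -> R)
  (Hfm : measurable_fun setT f) (Hf0 : forall x, 0 <= f x)
  (Hdens : forall A, measurable A -> P A = (\int[lam]_(x in A) (f x)%:E)%E)
  (dO : measure_display) (Omega : measurableType dO) (Pr : probability Omega R)
  (N : nat) (X : 'I_N -> Omega -> T)
  (HXm : forall i, measurable_fun setT (X i))
  (HXlaw : forall i A, measurable A -> Pr (X i @^-1` A) = P A)
  (HXind : mutually_independent Pr X)
  (h : T -> R) (hm : measurable_fun setT h) (c0 M : R) (c00 : 0 < c0) (M0 : 0 <= M)
  (hb : forall x, c0 <= h x <= M) :
  let mu := fine (\int[lam]_x (h x * f x)%:E)%E in
  0 < mu /\ forall t, 0 < t -> exists B, measurable B /\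
    [set w | mu ^+ N * t < \prod_(i < N) h (X i w)] `<=` B /\
    (Pr B <= (t^-1)%:E)%E.
Proof.
move=> mu.
have mhf : measurable_fun setT (EFin \o (fun x => h x * f x)).
  by apply/measurable_EFinP; apply: measurable_funM.
have mf' : measurable_fun setT (EFin \o f) by apply/measurable_EFinP.
have intf : (\int[lam]_x (f x)%:E)%E = 1%E by rewrite -Hdens // probability_setT.
have hp x : 0 <= h x by case/andP: (hb x) => /(le_trans (ltW c00)).
have lo : (c0%:E <= \int[lam]_x (h x * f x)%:E)%E.
  rewrite -[X in (X <= _)%E]mule1 -intf -ge0_integralZl //; last 2 first.
  - by move=> x _; rewrite lee_fin.
  - by rewrite lee_fin ltW.
  apply: ge0_le_integral => //.
  - by move=> x _; apply: mule_ge0; rewrite lee_fin // ltW.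
  - exact: measurable_funeM.
  - by move=> x _; rewrite -EFinM lee_fin ler_wpM2r //; case/andP: (hb x).
have up : (\int[lam]_x (h x * f x)%:E <= M%:E)%E.
  rewrite -[X in (_ <= X)%E]mule1 -intf -ge0_integralZl //;
    try by [move=> x _; rewrite lee_fin | rewrite lee_fin].
  apply: ge0_le_integral => //.
  - by move=> x _; rewrite lee_fin mulr_ge0.
  - apply: measurable_funeM => //.
  - by move=> x _; rewrite -EFinM lee_fin ler_wpM2r //; case/andP: (hb x).
have Hfin : (\int[lam]_x (h x * f x)%:E)%E \is a fin_num.
  rewrite ge0_fin_numE; first exact: (le_lt_trans up (ltry _)).
  by apply: le_trans lo; rewrite lee_fin ltW.
have Hmu : (\int[lam]_x (h x * f x)%:E)%E = mu%:E by rewrite fineK.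
have mu0 : 0 < mu by apply: (lt_le_trans c00); rewrite -lee_fin -Hmu.
split => // t t0.
pose c := mu ^+ N * t.
have cpos : 0 < c by rewrite mulr_gt0 // exprn_gt0.
have hb' x : 0 <= h x <= M by rewrite hp; case/andP: (hb x).
have ex K : exists B, measurable B /\
    [set w | c < \prod_(i < N) h (X i w)] `<=` B /\
    (Pr B <= (((mu + (K.+1%:R)^-1) ^+ N) / c)%:E)%E.
  have d0 : 0 < (K.+1%:R : R)^-1 by rewrite invr_gt0 ltr0Sn.
  exact: (core_delta _ _ _ _ _ _ Hfm Hf0 Hdens _ _ _ _ _ HXm HXlaw HXind _ hm _ hb' _ Hmu _ _ cpos d0).
have [Bf HB] := choice ex.
exists (\bigcap_(K in setT) Bf K).
split; first by apply: bigcap_measurableType => K _; case: (HB K).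
split; first by move=> w hw K _; case: (HB K) => _ [+ _]; apply.
have mB : measurable (\bigcap_(K in setT) Bf K).
  by apply: bigcap_measurableType => K _; case: (HB K).
rewrite -(fineK (fin_num_measure Pr _ mB)) lee_fin.
have -> : t^-1 = mu ^+ N / c.
  by rewrite /c invfM mulrA mulfV ?mul1r // expf_neq0 // gt_eqF.
pose Q0 := N%:R * (mu + 1) ^+ N.-1.
have Q00 : 0 <= Q0 by rewrite mulr_ge0 // exprn_ge0 // addr_ge0 // ltW.
apply: (@le_of_harm _ _ _ (Q0 / c)); first by rewrite divr_ge0 // ltW.
move=> K.
case: (HB K) => mBK [_ PBK].
have : (Pr (\bigcap_(K in setT) Bf K) <= (((mu + (K.+1%:R)^-1) ^+ N) / c)%:E)%E.
  apply: le_trans PBK; apply: le_measure; rewrite ?inE //.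
  by move=> w hw; apply: hw.
rewrite -[X in (X <= _)%E -> _](fineK (fin_num_measure Pr _ mB)) lee_fin => h1.
apply: (le_trans h1).
have del01 : 0 <= (K.+1%:R : R)^-1 <= 1.
  rewrite invr_ge0 ler0n /= invr_le1 ?unitfE ?pnatr_eq0 ?ltr0Sn //.
  by rewrite ler1n.
have := @pow_bound R mu _ N (ltW mu0) del01.
move=> pb.
rewrite mulrA -mulrDl; apply: ler_wpM2r; first by rewrite invr_ge0 ltW.
by [].
Qed.

Lemma intg_f (R : realType) (d : measure_display) (T : measurableType d)
  (lam : {measure set T -> \bar R}) (P : probability T R) (f : T -> R)
  (Hfm : measurable_fun setT f) (Hf0 : forall x, 0 <= f x)
  (Hdens : forall A, measurable A -> P A = (\int[lam]_(x in A) (f x)%:E)%E) :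
  lam.-integrable setT (EFin \o f).
Proof.
apply/integrableP; split; first exact/measurable_EFinP.
rewrite (eq_integral (fun x => (f x)%:E)); last first.
  by move=> x _ /=; rewrite ger0_norm.
by rewrite -Hdens // probability_setT ltry.
Qed.

Lemma intg_bdd (R : realType) (d : measure_display) (T : measurableType d)
  (lam : {measure set T -> \bar R}) (P : probability T R) (f : T -> R)
  (Hfm : measurable_fun setT f) (Hf0 : forall x, 0 <= f x)
  (Hdens : forall A, measurable A -> P A = (\int[lam]_(x in A) (f x)%:E)%E)
  (u : T -> R) (um : measurable_fun setT u) (B : R) (hu : forall x, `|u x| <= B) :
  lam.-integrable setT (EFin \o (fun x => u x * f x)).
Proof.
apply: (@le_integrable _ _ _ _ _ _ _ (fun x => (B%:E * (f x)%:E)%E)) => //.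
- by apply/measurable_EFinP; apply: measurable_funM.
- move=> x _ /=; rewrite lee_fin !normrM (ger0_norm (Hf0 x)).
  by apply: ler_wpM2r => //; apply: (le_trans (hu x)); apply: ler_norm.
- exact: (integrableZl measurableT B (intg_f _ _ _ _ _ _ Hfm Hf0 Hdens)).
Qed.

Lemma mu_form (R : realType) (d : measure_display) (T : measurableType d)
  (lam : {measure set T -> \bar R}) (P : probability T R) (f : T -> R)
  (Hfm : measurable_fun setT f) (Hf0 : forall x, 0 <= f x)
  (Hdens : forall A, measurable A -> P A = (\int[lam]_(x in A) (f x)%:E)%E)
  (g : T -> R) (gm : measurable_fun setT g) (B : R) (hg : forall x, `|g x| <= B)
  (s : R) :
  fine (\int[lam]_x ((1 - s * g x) * f x)%:E)%E =
  1 - s * fine (\int[lam]_x (g x * f x)%:E)%E.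
Proof.
have ig := intg_bdd _ _ _ _ _ _ Hfm Hf0 Hdens _ gm _ hg.
have iff := intg_f _ _ _ _ _ _ Hfm Hf0 Hdens.
have hsg x : `|s * g x| <= `|s| * B by rewrite normrM ler_wpM2l.
have isg := intg_bdd _ _ _ _ _ _ Hfm Hf0 Hdens _
  (measurable_funM (measurable_cst s) gm) _ hsg.
rewrite (eq_integral (fun x => (f x)%:E - (s * g x * f x)%:E)%E); last first.
  by move=> x _; rewrite -EFinB; congr EFin; ring.
rewrite integralB_EFin //.
rewrite [X in (_ - X)%E](eq_integral (fun x => s%:E * (g x * f x)%:E)%E); last first.
  by move=> x _; rewrite -EFinM mulrA.
rewrite integralZl // -Hdens // probability_setT.
set I := (\int[lam]_x (g x * f x)%:E)%E.
have : I \is a fin_num by apply: integrable_fin_num ig.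
by move/fineK => <-; rewrite -EFinM -EFinB.
Qed.

Lemma alg_step (R : realType) (N : nat) (hs : 'I_N -> R) (mu t : R) :
  (0 < N)%N -> (forall i, 0 < hs i) -> 0 < mu -> 0 < t ->
  \prod_i hs i <= mu ^+ N * t ->
  expR ((N%:R)^-1 * (\sum_i ln (hs i)) - ln t / N%:R) <= mu.
Proof.
move=> N0 hp mu0 t0 hle.
rewrite -ler_ln ?posrE ?expR_gt0 // expRK.
have : \sum_i ln (hs i) <= ln mu *+ N + ln t.
  rewrite -ln_prod // -lnXn // -lnM ?posrE ?exprn_gt0 //.
  by rewrite ler_ln ?posrE ?prodr_gt0 ?mulr_gt0 ?exprn_gt0.
have Npos : 0 < (N%:R : R) by rewrite ltr0n.
move=> h1.
rewrite mulrC -mulrBl ler_pdivrMr // -mulr_natr.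
lra.
Qed.

Theorem corollary6 (R : realType) (d : measure_display) (T : measurableType d)
  (lam : {measure set T -> \bar R}) (Hsf : sigma_finite setT lam)
  (P : probability T R) (f : T -> R)
  (Hfm : measurable_fun setT f) (Hf0 : forall x, 0 <= f x)
  (Hdens : forall A, measurable A -> P A = (\int[lam]_(x in A) (f x)%:E)%E)
  (HfL2 : lam.-integrable setT (fun x => (f x ^+ 2)%:E))
  (dO : measure_display) (Omega : measurableType dO) (Pr : probability Omega R)
  (N : nat) (HN : (0 < N)%N) (X : 'I_N -> Omega -> T)
  (HXm : forall i, measurable_fun setT (X i))
  (HXlaw : forall i A, measurable A -> Pr (X i @^-1` A) = P A)
  (HXind : mutually_independent Pr X)
  (m : nat) (fs : 'I_m -> T -> R)
  (Hfsm : forall k, measurable_fun setT (fs k))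
  (HfsL2 : forall k, lam.-integrable setT (fun x => (fs k x ^+ 2)%:E))
  (D : 'I_m -> R)
  (HD : forall k, D k = fine (\int[lam]_x (fs k x ^+ 2)%:E)%E)
  (HDpos : forall k, 0 < D k)
  (C : 'I_m -> R) (HCpos : forall k, 0 < C k)
  (Hbound : forall k x, `|fs k x| <= Num.sqrt (C k * D k))
  (a eps : R) (Ha : 1 < a) (Heps : 0 < eps) (k : 'I_m) :
  let abar := fine (\int[lam]_x (fs k x * f x)%:E)%E / D k in
  let eta := eps * ln a / (ln N%:R - 2^-1 * ln (C k * D k)) in
  let Lset := [set l : nat |
      (l%:Z <= Num.floor (ln (N%:R / Num.sqrt (C k * D k)) / ln a) - 1)%R] in
  exists E : set Omega, measurable E /\
    E `<=` [set w |
      (ereal_sup [set (alpha_inf m (fs k) (D k) (fun i => X i w) eta (a ^+ l))%:E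
                 | l in Lset] <= abar%:E)%E /\
      (abar%:E <= ereal_inf [set (alpha_sup m (fs k) (D k) (fun i => X i w) eta (a ^+ l))%:E
                 | l in Lset])%E] /\
    ((1 - eps)%:E <= Pr E)%E.

Proof.
move=> abar eta Lset.
have gm : measurable_fun setT (fs k) := Hfsm k.
set Bnd := Num.sqrt (C k * D k).
have CD0 : 0 < C k * D k by rewrite mulr_gt0.
have Bnd0 : 0 < Bnd by rewrite sqrtr_gt0.
have hg x : `|fs k x| <= Bnd := Hbound k x.
have m0 : (0 < m)%N by apply: leq_ltn_trans (ltn_ord k).
have N0 : 0 < (N%:R : R) by rewrite ltr0n.
have a0 : 0 < a by apply: lt_trans Ha.
have la0 : 0 < ln a by apply: ln_gt0.
set Lam := ln (N%:R / Bnd).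
have etaE : eta = eps * ln a / Lam.
  rewrite /eta; have -> : 2^-1 * ln (C k * D k) = ln Bnd.
    rewrite -[C k * D k](@sqr_sqrtr _ _ (ltW CD0)) -/Bnd lnXn //.
    lra.
  by rewrite /Lam ln_div ?posrE.
pose n := Num.trunc (Lam / ln a).
have HL l : Lset l <-> (l < n)%N.
  have -> : (l < n)%N = (l%:Z <= Num.floor (Lam / ln a) - 1).
    rewrite lerBrDr floor_ge_int truncn_gt_nat.
    have -> : (l%:Z + 1 = (l.+1)%:Z) by rewrite -addn1 PoszD.
    by rewrite -pmulrn.
  by [].
have HLb l : (l < n)%N -> a ^+ l.+1 <= N%:R / Bnd.
  rewrite truncn_gt_nat ler_pdivlMr // => hl.
  rewrite -ler_ln ?posrE ?exprn_gt0 ?divr_gt0 // lnXn // -/Lam -mulr_natl.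
  by [].
have Lpos : (0 < n)%N -> 0 < Lam.
  rewrite truncn_gt_nat ler_pdivlMr // mul1r => h1; exact: lt_le_trans h1.
have eta0 : (0 < n)%N -> 0 < eta.
  by move=> n0; rewrite etaE divr_gt0 ?mulr_gt0 ?Lpos.
have neta : n%:R * (eta / m%:R) <= eps.
  case: (posnP n) => [-> | n0]; first by rewrite mul0r ltW.
  have m1 : 1 <= (m%:R : R) by rewrite ler1n.
  have e0 := eta0 n0.
  apply: (@le_trans _ _ (n%:R * eta)).
    rewrite ler_wpM2l // ler_pdivrMr ?ltr0n //.
    by rewrite ler_peMr // ltW.
  have hn : (n%:R : R) <= Lam / ln a by rewrite truncn_le divr_ge0 // ltW ?Lpos.
  have Lp := Lpos n0.
  have h2 : n%:R * ln a / Lam <= 1.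
    by rewrite ler_pdivrMr // mul1r -ler_pdivlMr.
  rewrite etaE.
  have -> : n%:R * (eps * ln a / Lam) = eps * (n%:R * ln a / Lam).
    by rewrite !mulrA [n%:R * eps]mulrC.
  by rewrite ler_piMr // ltW.
pose good (l : nat) (w : Omega) :=
  alpha_inf m (fs k) (D k) (fun i => X i w) eta (a ^+ l) <= abar /\
  abar <= alpha_sup m (fs k) (D k) (fun i => X i w) eta (a ^+ l).
have ex l : exists B : set Omega, measurable B /\ ((l < n)%N ->
    (forall w, ~ B w -> good l w) /\ (Pr B <= (eta / m%:R)%:E)%E).
  case: (ltnP l n) => hln; last first.
    by exists set0; split => // h; rewrite leqNgt h in hln.
  have e0 := eta0 (leq_ltn_trans (leq0n l) hln).
  pose beta := a ^+ l.
  have b0 : 0 < beta by rewrite exprn_gt0.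
  pose b := beta / N%:R.
  have bpos : 0 < b by rewrite divr_gt0.
  have hb : b * Bnd <= a^-1.
    have := HLb l hln; rewrite exprS ler_pdivlMr // => h.
    have -> : b * Bnd = (a * beta * Bnd) / (a * N%:R).
      rewrite /b; field; apply/andP; split; by rewrite gt_eqF.
    have -> : a^-1 = N%:R / (a * N%:R).
      field; apply/andP; split; by rewrite gt_eqF.
    by rewrite ler_pM2r // invr_gt0 mulr_gt0.
  have ai1 : a^-1 < 1 by rewrite invf_lt1.
  have hs s : `|s| <= b -> forall x, 1 - a^-1 <= 1 - s * fs k x <= 2.
    move=> hsb x.
    have : `|s * fs k x| <= a^-1.
      rewrite normrM; apply: le_trans hb.
      by apply: ler_pM => //; apply: (le_trans (hg x)).
    move/ler_normlP => [h1 h2].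
    apply/andP; split; lra.
  have hm s : measurable_fun setT (fun x => 1 - s * fs k x).
    apply: measurable_funB; first exact: measurable_cst.
    by apply: measurable_funM => //; exact: measurable_cst.
  set I := fine (\int[lam]_x (fs k x * f x)%:E)%E.
  pose t := 2 * m%:R / eta.
  have t0 : 0 < t by rewrite divr_gt0 // mulr_gt0 // ltr0n.
  have c00 : 0 < 1 - a^-1 by rewrite subr_gt0.
  have M0 : 0 <= (2 : R) by [].
  have hbb : `|b| <= b by rewrite ger0_norm // ltW.
  have hbb' : `|- b| <= b by rewrite normrN ger0_norm // ltW.
  have [mu1p H1] := core _ _ _ _ _ _ Hfm Hf0 Hdens _ _ _ _ _ HXm HXlaw HXind _ (hm b) _ _ c00 M0
    (hs b hbb).
  have [mu2p H2] := core _ _ _ _ _ _ Hfm Hf0 Hdens _ _ _ _ _ HXm HXlaw HXind _ (hm (- b)) _ _ c00 M0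
    (hs (- b) hbb').
  rewrite (mu_form _ _ _ _ _ _ Hfm Hf0 Hdens _ gm _ hg) -/I in mu1p H1.
  rewrite (mu_form _ _ _ _ _ _ Hfm Hf0 Hdens _ gm _ hg) -/I in mu2p H2.
  have [B1 [mB1 [sB1 PB1]]] := H1 t t0.
  have [B2 [mB2 [sB2 PB2]]] := H2 t t0.
  exists (B1 `|` B2); split; first exact: measurableU.
  move=> _; split; last first.
    apply: le_trans (measureU2 _ _ _) _ => //.
    have -> : eta / m%:R = t^-1 + t^-1.
      rewrite /t; field; rewrite pnatr_eq0 -lt0n m0 /=.
      by rewrite gt_eqF.
    by rewrite EFinD leeD.
  move=> w nB.
  have p1 : \prod_i (1 - b * fs k (X i w)) <= (1 - b * I) ^+ N * t.
    by rewrite leNgt; apply/negP => hlt; apply: nB; left; apply: sB1.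
  have p2 : \prod_i (1 + b * fs k (X i w)) <= (1 + b * I) ^+ N * t.
    rewrite leNgt; apply/negP => hlt; apply: nB; right; apply: sB2.
    rewrite /= mulNr opprK.
    by under eq_bigr do rewrite mulNr opprK.
  have hp1 i : 0 < 1 - b * fs k (X i w).
    by case/andP: (hs b hbb (X i w)) => h _; apply: lt_le_trans h.
  have hp2 i : 0 < 1 + b * fs k (X i w).
    case/andP: (hs (- b) hbb' (X i w)) => h _; rewrite mulNr opprK in h.
    exact: lt_le_trans h.
  rewrite mulNr opprK in mu2p.
  have DB : 0 < D k * beta by rewrite mulr_gt0.
  have NbE : N%:R * b = beta by rewrite /b mulrCA mulfV ?mulr1 // gt_eqF.
  have Dk0 : D k != 0 by rewrite gt_eqF.
  have IbE : I / D k * (D k * beta) = I * beta by field.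
  rewrite /good /alpha_inf /alpha_sup /= -/beta -/b -/abar.
  have -> : abar = I / D k by [].
  split.
  - rewrite ler_pdivrMr // IbE.
    have := alg_step _ N (fun i => 1 + b * fs k (X i w)) (1 + b * I) t HN hp2 mu2p t0 p2.
    move=> /= he.
    have := ler_wpM2l (ltW N0) he; rewrite mulrDr mulr1 mulrA NbE => he2.
    lra.
  - rewrite ler_pdivlMr // IbE.
    have := alg_step _ N (fun i => 1 - b * fs k (X i w)) (1 - b * I) t HN hp1 mu1p t0 p1.
    move=> /= he.
    have := ler_wpM2l (ltW N0) he; rewrite mulrBr mulr1 mulrA NbE => he2.
    lra.
have [Bf HB] := choice ex.
pose U := \big[setU/set0]_(l < n) Bf l.
have mBf l : measurable (Bf l) by case: (HB l).
have mU : measurable U by apply: bigsetU_measurable.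
exists (~` U); split; first exact: measurableC.
split.
  move=> w /= nU.
  have gl l : Lset l -> good l w.
    move=> /HL hl; case: (HB l) => _ /(_ hl) [Hg _]; apply: Hg => Bw.
    by apply: nU; apply: (bigsetU_sup hl Bw).
  split.
  - by apply: ge_ereal_sup => y [l Ll <-]; rewrite lee_fin; case: (gl l Ll).
  - by apply/ereal_infP => y [l Ll <-]; rewrite lee_fin; case: (gl l Ll).
rewrite probability_setC //.
have PU : (Pr U <= eps%:E)%E.
  apply: le_trans (@sub_bigU _ _ _ Pr _ (index_enum 'I_n) (fun l : 'I_n => Bf l)
    (fun l => mBf l)) _.
  apply: (@le_trans _ _ (\sum_(l < n) (eta / m%:R)%:E)%E).
    by apply: lee_sum => l _; case: (HB l) => _ /(_ (ltn_ord l)) [].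
  by rewrite sumEFin lee_fin sumr_const card_ord -[_ *+ n]mulr_natl.
move: PU; rewrite -(fineK (fin_num_measure Pr _ mU)) -EFinB !lee_fin => PU.
lra.
Qed.
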